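(* Let $\mathfrak C$ be a complex operator ideal. The following are equivalent: (1) $\mathfrak C$ is self conjugate, i.e. $\overline{\mathfrak C}=\mathfrak C$. (2) For all Banach spaces with an $i$-operator $[X,A]$, $[Y,B]$ and every bounded linear $T:X\to Y$ with $TA=BT$: $[T\oplus T,A\oplus -A,B\oplus -B]\in\mathfrak C([X\oplus X,A\oplus -A],[Y\oplus Y,B\oplus -B])$ if and only if $[T,A,B]\in\mathfrak C([X,A],[Y,B])$.
   Context: A Banach space with an $i$-operator is a pair $[X,A]$ with $X$ a real Banach space and $A:X\to X$ bounded linear with $A^2=-I_X$ and $\|\alpha x+\beta Ax\|=\|x\|$ whenever $\alpha^2+\beta^2=1$; these correspond to complex Banach spaces. If $[X,A]$ is such a space, so is $[X,-A]$ (the complex conjugate space). A bounded linear $T:X\to Y$ with $TA=BT$ is a complex operator $[T,A,B]:[X,A]\to[Y,B]$; then also $T(-A)=(-B)T$ and $\overline{[T,A,B]}:=[T,-A,-B]$ is its complex conjugate. A complex operator ideal (Pietsch) assigns to each pair of such spaces a linear subspace of complex operators between them, containing all finite rank complex operators and stable under composition on either side with bounded complex operators. The conjugate ideal is $\overline{\mathfrak C}=\{[T,-A,-B]:[T,A,B]\in\mathfrak C\}$. $A\oplus -A$ is the $i$-operator $(x_1,x_2)\mapsto(Ax_1,-Ax_2)$ on $X\oplus X$ and $(T\oplus T)(x_1,x_2)=(Tx_1,Tx_2)$. *)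

(* Defs.v *)
From HB Require Import structures.
From mathcomp Require Import all_boot all_order all_algebra.
From mathcomp Require Import all_classical all_reals all_analysis.
Set Implicit Arguments. Unset Strict Implicit. Unset Printing Implicit Defensive.
Import Order.TTheory GRing.Theory Num.Theory.
Local Open Scope classical_set_scope.
Local Open Scope ring_scope.

(** MathComp-Analysis equips X * Y with the (max-)norm and a normed module
    structure; we add the (true) fact that it is complete, so that
    X (+) Y is again a Banach space. *)

HB.instance Definition _ (R : realType) (X Y : completeNormedModType R) :=
  Pointed.on (X * Y)%type.

Lemma prod_complete (R : realType) (X Y : completeNormedModType R)
  (F : set_system (X * Y)%type) : ProperFilter F -> cauchy F -> cvg F.
Proof.
move=> FF /(@cauchyP R [the pseudoMetricType R of (X * Y)%type]) Fc.
have c1 : cauchy (fst @ F).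
  apply/(@cauchyP R X) => //; rewrite /cauchy_ex => e e0; have [z Fz] := Fc e e0; exists z.1.
  suff : F [set p | ball z.1 e p.1] by [].
  by apply: filterS Fz => p; rewrite /ball /= /prod_ball => -[].
have c2 : cauchy (snd @ F).
  apply/(@cauchyP R Y) => //; rewrite /cauchy_ex => e e0; have [z Fz] := Fc e e0; exists z.2.
  suff : F [set p | ball z.2 e p.2] by [].
  by apply: filterS Fz => p; rewrite /ball /= /prod_ball => -[].
have Ha : fst @ F --> lim (fst @ F) by apply: cauchy_cvg.
have Hb : snd @ F --> lim (snd @ F) by apply: cauchy_cvg.
apply/cvg_ex; exists (lim (fst @ F), lim (snd @ F)).
have := cvg_pair Ha Hb.
suff -> : (fun x : X * Y => (x.1, x.2)) = id by move=> h; exact: h.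
by apply: funext => -[].
Qed.

HB.instance Definition _ (R : realType) (X Y : completeNormedModType R) :=
  Uniform_isComplete.Build (X * Y)%type (@prod_complete R X Y).

Section Defs.
Variable R : realType.

Definition bounded_linear (X Y : normedModType R) (f : X -> Y) : Prop :=
  (forall (a : R) (x y : X), f (a *: x + y) = a *: f x + f y) /\
  (exists M : R, forall x : X, `|f x| <= M * `|x|).

Definition i_operator (X : normedModType R) (A : X -> X) : Prop :=
  [/\ bounded_linear A,
      (forall x, A (A x) = - x) &
      (forall (a b : R) (x : X), a ^+ 2 + b ^+ 2 = 1 ->
         `|a *: x + b *: A x| = `|x|)].

Definition complex_op (X Y : normedModType R) (A : X -> X) (B : Y -> Y)
  (T : X -> Y) : Prop :=
  bounded_linear T /\ (forall x, T (A x) = B (T x)).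

Definition finite_rank (X Y : normedModType R) (T : X -> Y) : Prop :=
  exists (n : nat) (v : 'I_n -> Y),
    forall x : X, exists c : 'I_n -> R, T x = \sum_(i < n) c i *: v i.

Definition conj_iop (X : normedModType R) (A : X -> X) : X -> X :=
  fun x => - A x.

Definition dsum_iop (X : completeNormedModType R) (A : X -> X) :
  (X * X)%type -> (X * X)%type :=
  fun p => (A p.1, - A p.2).

Definition dsum_op (X Y : completeNormedModType R) (T : X -> Y) :
  (X * X)%type -> (Y * Y)%type :=
  fun p => (T p.1, T p.2).

(** A candidate complex operator ideal: for every pair of Banach spaces
    with i-operators [X,A], [Y,B], the set of T with C X Y A B T is
    C([X,A],[Y,B]) (only meaningful when A, B are i-operators). *)
Definition cideal_family : Type :=
  forall (X Y : completeNormedModType R), (X -> X) -> (Y -> Y) -> (X -> Y) -> Prop.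

Definition is_complex_operator_ideal (C : cideal_family) : Prop :=
  forall (X Y : completeNormedModType R) (A : X -> X) (B : Y -> Y),
    i_operator A -> i_operator B ->
    [/\ (forall T, C X Y A B T -> complex_op A B T),
        (forall T, complex_op A B T -> finite_rank T -> C X Y A B T),
        (forall S T, C X Y A B S -> C X Y A B T ->
                     C X Y A B (fun x => S x + T x)),
        (forall (a b : R) T, C X Y A B T ->
                     C X Y A B (fun x => a *: T x + b *: B (T x))) &
        (forall (X0 Y0 : completeNormedModType R) (A0 : X0 -> X0) (B0 : Y0 -> Y0),
           i_operator A0 -> i_operator B0 ->
           forall (S : X0 -> X) (T : X -> Y) (U : Y -> Y0),
             complex_op A0 A S -> C X Y A B T -> complex_op B B0 U ->
             C X0 Y0 A0 B0 (fun x => U (T (S x))))].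

Definition conj_ideal (C : cideal_family) : cideal_family :=
  fun X Y A B T => C X Y (conj_iop A) (conj_iop B) T.

Definition self_conjugate (C : cideal_family) : Prop :=
  forall (X Y : completeNormedModType R) (A : X -> X) (B : Y -> Y),
    i_operator A -> i_operator B ->
    forall T : X -> Y, @conj_ideal C X Y A B T <-> C X Y A B T.

End Defs.

(* Main.v *)
Require Import Defs.
From HB Require Import structures.
From mathcomp Require Import all_boot all_order all_algebra.
From mathcomp Require Import all_classical all_reals all_analysis.
Import Order.TTheory GRing.Theory Num.Theory.
Local Open Scope ring_scope.
Set Implicit Arguments. Unset Strict Implicit.

Section Helpers.
Variable R : realType.

Lemma bl0 (X Y : normedModType R) (f : X -> Y) : bounded_linear f -> f 0 = 0.
Proof.
case=> lin _; have := lin (-1) 0 0.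
by rewrite scaler0 addr0 scaleN1r => ->; rewrite addNr.
Qed.

Lemma blN (X Y : normedModType R) (f : X -> Y) x : bounded_linear f -> f (- x) = - f x.
Proof.
move=> hf; have := hf.1 (-1) x 0; rewrite (bl0 hf) !addr0 !scaleN1r; done.
Qed.

Lemma iop_conj (X : normedModType R) (A : X -> X) :
  i_operator A -> i_operator (conj_iop A).
Proof.
case=> hA hAA hn; split.
- split.
  + by move=> a x y; rewrite /conj_iop hA.1 opprD -scalerN.
  + case: hA.2 => M hM; exists M => x; rewrite /conj_iop normrN; exact: hM.
- by move=> x; rewrite /conj_iop (blN _ hA) opprK hAA.
- move=> a b x h; rewrite /conj_iop scalerN -scaleNr; apply: hn.
  by rewrite sqrrN.
Qed.

Lemma conj_conj (X : normedModType R) (A : X -> X) : conj_iop (conj_iop A) = A.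
Proof. by apply: funext => x; rewrite /conj_iop opprK. Qed.

Lemma iop_dsum (X : completeNormedModType R) (A : X -> X) :
  i_operator A -> @i_operator R (X * X)%type (dsum_iop A).
Proof.
case=> hA hAA hn; split.
- split.
  + move=> a [x1 x2] [y1 y2]; rewrite /dsum_iop /=.
    rewrite !hA.1 opprD -scalerN; done.
  + case: hA.2 => M hM; exists `|M| => -[x1 x2]; rewrite /dsum_iop !prod_normE /= normrN.
    have h1 : `|A x1| <= `|M| * Num.max `|x1| `|x2|.
      apply: (le_trans (hM x1)); apply: (le_trans (ler_norm _) _) => //.
      by rewrite normrM normr_id ler_wpM2l // le_max lexx.
    have h2 : `|A x2| <= `|M| * Num.max `|x1| `|x2|.
      apply: (le_trans (hM x2)); apply: (le_trans (ler_norm _) _) => //.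
      by rewrite normrM normr_id ler_wpM2l // le_max lexx orbT.
    by rewrite ge_max h1 h2.
- by move=> [x1 x2]; rewrite /dsum_iop /= (blN _ hA) opprK !hAA.
- move=> a b [x1 x2] h; rewrite /dsum_iop !prod_normE /=.
  rewrite hn // scalerN -scaleNr hn //; by rewrite sqrrN.
Qed.

Lemma pair_addE (X Y : completeNormedModType R) (p q : (X * Y)%type) :
  p + q = (p.1 + q.1, p.2 + q.2).
Proof. by case: p; case: q. Qed.

Lemma pair_scaleE (X Y : completeNormedModType R) (a : R) (p : (X * Y)%type) :
  a *: p = (a *: p.1, a *: p.2).
Proof. by case: p. Qed.

Lemma iop_bl (X : normedModType R) (A : X -> X) : i_operator A -> bounded_linear A.
Proof. by case. Qed.

Lemma cop_inl (X : completeNormedModType R) (A : X -> X) :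
  bounded_linear A -> @complex_op R X (X * X)%type A (dsum_iop A) (fun x => (x, 0)).
Proof.
move=> hA; split; last by move=> x; rewrite /dsum_iop /= (bl0 hA) oppr0.
split; first by move=> a x y; rewrite pair_addE pair_scaleE /= scaler0 addr0.

by exists 1 => x; rewrite mul1r prod_normE /= normr0 (max_l (normr_ge0 _)).
Qed.

Lemma cop_inr (X : completeNormedModType R) (A : X -> X) :
  bounded_linear A -> @complex_op R X (X * X)%type (conj_iop A) (dsum_iop A) (fun x => (0, x)).
Proof.
move=> hA; split; last by move=> x; rewrite /dsum_iop /= (bl0 hA).
split; first by move=> a x y; rewrite pair_addE pair_scaleE /= scaler0 addr0.
by exists 1 => x; rewrite mul1r prod_normE /= normr0 (max_r (normr_ge0 _)).
Qed.

Lemma cop_fst (X : completeNormedModType R) (A : X -> X) :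
  @complex_op R (X * X)%type X (dsum_iop A) A fst.
Proof.
split => //; split => //.
by exists 1 => -[x1 x2]; rewrite mul1r prod_normE /= le_max lexx.
Qed.

Lemma cop_snd (X : completeNormedModType R) (A : X -> X) :
  @complex_op R (X * X)%type X (dsum_iop A) (conj_iop A) snd.
Proof.
split => //; split => //.
by exists 1 => -[x1 x2]; rewrite mul1r prod_normE /= le_max lexx orbT.
Qed.

End Helpers.

Theorem proposition5 (R : realType) (C : cideal_family R) :
  is_complex_operator_ideal C ->
  (self_conjugate C <->
   (forall (X Y : completeNormedModType R) (A : X -> X) (B : Y -> Y),
      i_operator A -> i_operator B ->
      forall T : X -> Y, complex_op A B T ->
        (C (X * X)%type (Y * Y)%type (dsum_iop A) (dsum_iop B) (dsum_op T)
         <-> C X Y A B T))).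
Proof.
move=> hI.
have key : forall (X Y : completeNormedModType R) (A : X -> X) (B : Y -> Y),
    i_operator A -> i_operator B ->
    (forall (X Y : completeNormedModType R) (A : X -> X) (B : Y -> Y),
      i_operator A -> i_operator B ->
      forall T : X -> Y, complex_op A B T ->
        (C (X * X)%type (Y * Y)%type (dsum_iop A) (dsum_iop B) (dsum_op T)
         <-> C X Y A B T)) ->
    forall T, C X Y A B T -> C X Y (conj_iop A) (conj_iop B) T.
  move=> X Y A B iA iB H T hT.
  have [c1 _ _ _ _] := hI X Y A B iA iB.
  have cT := c1 T hT.
  have hTT := (H X Y A B iA iB T cT).2 hT.
  have [_ _ _ _ c5] := hI _ _ _ _ (iop_dsum iA) (iop_dsum iB).
  have := c5 X Y (conj_iop A) (conj_iop B) (iop_conj iA) (iop_conj iB)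
    (fun x => (0, x)) (dsum_op T) snd (cop_inr (iop_bl iA)) hTT (cop_snd B).
  by [].
split.
  move=> H1 X Y A B iA iB T cT; split.
    move=> hTT.
    have [_ _ _ _ c5] := hI _ _ _ _ (iop_dsum iA) (iop_dsum iB).
    have := c5 X Y A B iA iB
      (fun x => (x, 0)) (dsum_op T) fst (cop_inl (iop_bl iA)) hTT (cop_fst B).
    by [].
  move=> hT.
  have hT' : C X Y (conj_iop A) (conj_iop B) T by apply/(H1 X Y A B iA iB).
  have [_ _ c3 _ _] := hI _ _ _ _ (iop_dsum iA) (iop_dsum iB).
  have [_ _ _ _ d5] := hI _ _ _ _ iA iB.
  have [_ _ _ _ e5] := hI _ _ _ _ (iop_conj iA) (iop_conj iB).
  have h1 := d5 _ _ _ _ (iop_dsum iA) (iop_dsum iB) fst T (fun y => (y, 0))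
     (cop_fst A) hT (cop_inl (iop_bl iB)).
  have h2 := e5 _ _ _ _ (iop_dsum iA) (iop_dsum iB) snd T (fun y => (0, y))
     (cop_snd A) hT' (cop_inr (iop_bl iB)).
  have := c3 _ _ h1 h2.
  suff -> : (fun x : X * X => (T x.1, 0) + (0, T x.2)) = dsum_op T by [].
  by apply: funext => -[x1 x2]; rewrite pair_addE /= addr0 add0r.
move=> H X Y A B iA iB T; split.
  move=> hT.
  have := key X Y (conj_iop A) (conj_iop B) (iop_conj iA) (iop_conj iB) H T hT.
  by rewrite !conj_conj.
exact: key.
Qed.
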